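(* Let $M$ be a matroid, $\mathcal{T}$ a tangle of $M$ of order $\theta$, and $N$ a minor of $M$ with $E(M)\setminus E(N) = \{e\}$. Let $\mathcal{T}'$ be the tangle of $N$ inherited from $\mathcal{T}$, and let $Z\subseteq E(N)$. \begin{enumerate} \item $r_{\mathcal{T}}(Z) - 1 \leq r_{\mathcal{T}'}(Z) \leq r_\mathcal{T}(Z)$; \item If $e\not\in \mathrm{cl}_\mathcal{T}(Z)$ and $r_\mathcal{T}(Z) < \theta$ then $r_{\mathcal{T}'}(Z) = r_{\mathcal{T}}(Z)$. \end{enumerate}
   Context: The connectivity function is $\lambda_M(X)=r_M(X)+r_M(E(M)\setminus X)-r(M)$. A tangle of order $\theta$ of $M$ is a collection $\mathcal{T}$ of subsets of $E(M)$ such that: every $X\in\mathcal{T}$ has $\lambda_M(X)<\theta$; for every $X$ with $\lambda_M(X)<\theta$, either $X\in\mathcal{T}$ or $E(M)\setminus X\in\mathcal{T}$; no three members of $\mathcal{T}$ cover $E(M)$; and $E(M)\setminus\{e\}\notin\mathcal{T}$ for each $e\in E(M)$. The tangle matroid $M(\mathcal{T})$ has rank function $r_\mathcal{T}(X)=\min\{\lambda_M(Y): X\subseteq Y\in\mathcal{T}\}$ if such $Y$ exists, and $\theta$ otherwise; $\mathrm{cl}_\mathcal{T}$ denotes the closure operator of $M(\mathcal{T})$. For a minor $N$ with $E(M)\setminus E(N)=S$, the tangle of $N$ inherited from $\mathcal{T}$ is $\mathcal{T}'=\{X\setminus S: X\in\mathcal{T},\ \lambda_N(X)<\theta-|S|\}$,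 a tangle of $N$ of order $\theta-|S|$; $r_{\mathcal{T}'}$ is the rank function of $N(\mathcal{T}')$. *)

(* Defs.v *)
From mathcomp Require Import all_boot.
Set Implicit Arguments. Unset Strict Implicit. Unset Printing Implicit Defensive.

Record matroid (T : finType) := Matroid {
  ground : {set T};
  rk : {set T} -> nat;
  rk_card : forall X : {set T}, X \subset ground -> rk X <= #|X|;
  rk_mono : forall X Y : {set T}, X \subset Y -> Y \subset ground -> rk X <= rk Y;
  rk_submod : forall X Y : {set T}, X \subset ground -> Y \subset ground ->
     rk (X :|: Y) + rk (X :&: Y) <= rk X + rk Y
}.

Section Defs.
Variable T : finType.
Implicit Types (M N : matroid T) (X Y Z : {set T}) (Tg : {set {set T}}).

Definition conn M X : nat :=
  rk M X + rk M (ground M :\: X) - rk M (ground M).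

(* N is a minor of M: N = M / C \ D for disjoint C, D subsets of E(M) *)
Definition is_minor N M : Prop :=
  exists C D : {set T},
    [/\ [disjoint C & D], C :|: D \subset ground M,
        ground N = ground M :\: (C :|: D) &
        forall X, X \subset ground N -> rk N X = rk M (X :|: C) - rk M C].

Definition is_tangle M (theta : nat) Tg : Prop :=
  [/\ (forall X, X \in Tg -> X \subset ground M /\ conn M X < theta),
      (forall X, X \subset ground M -> conn M X < theta ->
          X \in Tg \/ (ground M :\: X) \in Tg),
      (forall A B C : {set T}, A \in Tg -> B \in Tg -> C \in Tg ->
          ~ (ground M \subset A :|: B :|: C)) &
      (forall x, x \in ground M -> (ground M :\ x) \notin Tg)].

(* rank function of the tangle matroid: min of lambda(Y) over Y in Tg
   containing X, or theta if there is no such Y (all such lambda(Y) are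
   < theta, so the min with default theta is the intended value) *)
Definition tangle_rank M (theta : nat) Tg X : nat :=
  \big[minn/theta]_(Y in Tg | X \subset Y) conn M Y.

Definition tangle_cl M (theta : nat) Tg X : {set T} :=
  [set x in ground M | tangle_rank M theta Tg (x |: X) == tangle_rank M theta Tg X].

Definition inherited_tangle M N (theta : nat) Tg : {set {set T}} :=
  [set X :\: (ground M :\: ground N) | X in Tg &
       conn N (X :\: (ground M :\: ground N)) < theta - #|ground M :\: ground N| ].

End Defs.

(* Main.v *)
Require Import Defs.
From mathcomp Require Import all_boot zify.

Section S.
Variable T : finType.

Lemma bigmin_lb (P : pred {set T}) (F : {set T} -> nat) (d m : nat) :
  m <= d -> (forall i, P i -> m <= F i) -> m <= \big[minn/d]_(i | P i) F i.
Proof. move=> hd hF; elim/big_ind: _ => //. all: try by move=> x y hx hy; rewrite leq_min hx hy. Qed.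

Lemma bigmin_ub (P : pred {set T}) (F : {set T} -> nat) (d : nat) i :
  P i -> \big[minn/d]_(i | P i) F i <= F i.
Proof.
move=> Pi; rewrite unlock; have : i \in index_enum {set T} by rewrite mem_index_enum.
elim: (index_enum _) => //= j s IH; rewrite inE => /orP[/eqP <-|/IH h].
  by rewrite /= Pi geq_minl.
case: (P j) => //=; exact: leq_trans (geq_minr _ _) h.
Qed.

Lemma bigmin_d (P : pred {set T}) (F : {set T} -> nat) (d : nat) :
  \big[minn/d]_(i | P i) F i <= d.
Proof.
rewrite unlock; elim: (index_enum _) => //= j s IH.
case: (P j) => //=; exact: leq_trans (geq_minr _ _) IH.
Qed.

Ltac sv X e He HX := let x := fresh "x" in let hx := fresh "hx" in
  (apply/setP => x || apply/subsetP => x); rewrite ?inE;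
  case: (eqVneq x e) => [->|_]; rewrite ?He ?eqxx /=;
  [ by case: (_ \in X) | ];
  case hx: (x \in X); [rewrite ?(subsetP HX x hx) | ]; by case: (x \in ground _).

Ltac sv2 X e He HX eX := let x := fresh "x" in let hx := fresh "hx" in
  (apply/setP => x || apply/subsetP => x); rewrite ?inE;
  case: (eqVneq x e) => [->|_]; rewrite ?He ?eqxx /=;
  [ by move: eX; case: (e \in X) | ];
  case hx: (x \in X); [rewrite ?(subsetP HX x hx) | ]; by case: (x \in ground _).

Lemma conn_bounds (M N : matroid T) (e : T) :
  e \in ground M -> ground N = ground M :\ e ->
  ((forall X : {set T}, X \subset ground N -> rk N X = rk M X) \/
   (forall X : {set T}, X \subset ground N -> rk N X = rk M (X :|: [set e]) - rk M [set e])) ->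
  forall X : {set T}, X \subset ground M ->
  conn N (X :\ e) <= conn M X <= (conn N (X :\ e)).+1.
Proof.
move=> He GN Hr X HX.
have r0 : rk M set0 = 0.
  by apply/eqP; rewrite -leqn0 -(cards0 T) rk_card ?sub0set.
have rs : rk M [set e] <= 1 by rewrite -(cards1 e) rk_card // sub1set.
have sY : X :\ e \subset (ground M) by sv X e He HX.
have sYe : (X :\ e) :|: [set e] \subset (ground M) by sv X e He HX.
have sY' : ((ground M) :\ e) :\: (X :\ e) \subset (ground M) by sv X e He HX.
have sY'e : (((ground M) :\ e) :\: (X :\ e)) :|: [set e] \subset (ground M) by sv X e He HX.
have sE' : (ground M) :\ e \subset (ground M) by sv X e He HX.
have se : [set e] \subset (ground M) by rewrite sub1set.
have f1 := rk_mono (subsetUl (X :\ e) [set e]) sYe.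
have f2 := rk_submod sY se.
have f3 := rk_mono (subsetUl (((ground M) :\ e) :\: (X :\ e)) [set e]) sY'e.
have f4 := rk_submod sY' se.
have f5 := rk_mono sE' (subxx (ground M)).
have f6 := rk_submod sYe sE'.
have Eq1 : (X :\ e) :|: [set e] :|: (ground M) :\ e = (ground M) by sv X e He HX.
rewrite Eq1 in f6.
have Eq2 : ((X :\ e) :|: [set e]) :&: ((ground M) :\ e) = X :\ e by sv X e He HX.
rewrite Eq2 in f6.
have f7 := rk_submod sY'e sE'.
have Eq3 : (((ground M) :\ e) :\: (X :\ e)) :|: [set e] :|: (ground M) :\ e = (ground M) by sv X e He HX.
rewrite Eq3 in f7.
have Eq4 : ((((ground M) :\ e) :\: (X :\ e)) :|: [set e]) :&: ((ground M) :\ e) = ((ground M) :\ e) :\: (X :\ e) by sv X e He HX.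
rewrite Eq4 in f7.
have f8 := rk_submod sY sY'.
have Eq5 : (X :\ e) :|: (((ground M) :\ e) :\: (X :\ e)) = (ground M) :\ e by sv X e He HX.
rewrite Eq5 in f8.
have f9 := rk_submod sYe sY'.
have Eq6 : (X :\ e) :|: [set e] :|: (((ground M) :\ e) :\: (X :\ e)) = (ground M) by sv X e He HX.
rewrite Eq6 in f9.
have f10 := rk_submod sY sY'e.
have Eq7 : (X :\ e) :|: ((((ground M) :\ e) :\: (X :\ e)) :|: [set e]) = (ground M) by sv X e He HX.
rewrite Eq7 in f10.
have f11 := rk_submod sYe sY'e.
have Eq8 : (X :\ e) :|: [set e] :|: ((((ground M) :\ e) :\: (X :\ e)) :|: [set e]) = (ground M) by sv X e He HX.
rewrite Eq8 in f11.
have Eq9 : ((X :\ e) :|: [set e]) :&: ((((ground M) :\ e) :\: (X :\ e)) :|: [set e]) = [set e] by sv X e He HX.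
rewrite Eq9 in f11.
have f12 := rk_mono (subsetUr (X :\ e) [set e]) sYe.
have f13 := rk_mono (subsetUr (((ground M) :\ e) :\: (X :\ e)) [set e]) sY'e.
have f14 := rk_mono se (subxx (ground M)).
have sNY : X :\ e \subset ground N by rewrite GN; sv X e He HX.
have sNY' : ground N :\: (X :\ e) \subset ground N by apply: subsetDl.
have sNE : ground N \subset ground N by [].
have g2 := leq_trans (leq_addr _ _) f2.
have g4 := leq_trans (leq_addr _ _) f4.
have g8 := leq_trans (leq_addr _ _) f8.
have g9 := leq_trans (leq_addr _ _) f9.
have g10 := leq_trans (leq_addr _ _) f10.
clear f2 f4 f8 f9 f10 Eq1 Eq2 Eq3 Eq4 Eq5 Eq6 Eq7 Eq8 Eq9.
have EG : ((ground M) :\ e) :|: [set e] = ground M by sv X e He HX.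
rewrite /conn.
case: (boolP (e \in X)) => eX.
- have -> : rk M X = rk M ((X :\ e) :|: [set e]) by congr rk; sv2 X e He HX eX.
  have -> : (ground M) :\: X = ((ground M) :\ e) :\: (X :\ e) by sv2 X e He HX eX.
  case: Hr => Hr; rewrite !Hr // GN ?EG; clear -rs f1 g2 f3 g4 f5 f6 f7 g8 g9 g10 f11 f12 f13 f14; apply/andP; split; lia.
- have -> : (ground M) :\: X = (((ground M) :\ e) :\: (X :\ e)) :|: [set e] by sv2 X e He HX eX.
  have -> : rk M X = rk M (X :\ e) by congr rk; sv2 X e He HX eX.
  case: Hr => Hr; rewrite !Hr // GN ?EG; clear -rs f1 g2 f3 g4 f5 f6 f7 g8 g9 g10 f11 f12 f13 f14; apply/andP; split; lia.
Qed.

Lemma main_thm (M N : matroid T) (theta : nat)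
    (Tg : {set {set T}}) (e : T) (Z : {set T}) :
  is_tangle M theta Tg ->
  is_minor N M ->
  ground M :\: ground N = [set e] ->
  Z \subset ground N ->
  (tangle_rank M theta Tg Z - 1
     <= tangle_rank N (theta - 1) (inherited_tangle M N theta Tg) Z
     <= tangle_rank M theta Tg Z)
  /\
  (e \notin tangle_cl M theta Tg Z -> tangle_rank M theta Tg Z < theta ->
     tangle_rank N (theta - 1) (inherited_tangle M N theta Tg) Z
       = tangle_rank M theta Tg Z).
Proof.
move=> [T1 T2 T3 T4] [C [D [dCD CDsub GN HrN]]] HGe HZ.
have He : e \in ground M by move: (set11 e); rewrite -HGe inE => /andP[].
have GN' : ground N = ground M :\ e.
  apply/setP => x; rewrite !inE.
  have h1 := congr1 (fun S : {set T} => x \in S) HGe. rewrite /= !inE in h1.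
  have h2 : x \in ground N -> x \in ground M by rewrite GN inE => /andP[].
  by move: h1 h2; case: (x \in ground N); case: (x \in ground M); case: (x == e) => //= _ /(_ isT).
have r0 : rk M set0 = 0.
  by apply/eqP; rewrite -leqn0 -(cards0 T) rk_card ?sub0set.
have Csub : C \subset [set e].
  apply/subsetP => x xC. have xM : x \in ground M by apply: (subsetP CDsub); rewrite inE xC.
  have : x \notin ground N by rewrite GN !inE xC.
  by rewrite GN' !inE xM andbT negbK.
have Hr : (forall X : {set T}, X \subset ground N -> rk N X = rk M X) \/
   (forall X : {set T}, X \subset ground N -> rk N X = rk M (X :|: [set e]) - rk M [set e]).
  case: (boolP (e \in C)) => eC.
  - right. have <- : C = [set e] by apply/eqP; rewrite eqEsubset Csub sub1set eC. exact: HrN.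
  - left. have C0 : C = set0.
      apply/setP => x; rewrite inE; apply/negbTE; apply/negP => xC.
      have := subsetP Csub x xC; rewrite inE => /eqP ex; by rewrite -ex xC in eC.
    by move=> X hX; rewrite HrN // C0 setU0 r0 subn0.
have CB := @conn_bounds M N e He GN' Hr.
have memT' : forall Y : {set T}, Y \in inherited_tangle M N theta Tg ->
    exists X, [/\ X \in Tg, Y = X :\ e & conn N (X :\ e) < theta - 1].
  move=> Y; rewrite /inherited_tangle HGe cards1 => /imsetP [X]; rewrite inE => /andP[XT hc] ->.
  by exists X.
have inT' : forall X : {set T}, X \in Tg -> conn N (X :\ e) < theta - 1 ->
    X :\ e \in inherited_tangle M N theta Tg.
  move=> X XT hc; rewrite /inherited_tangle HGe cards1; apply/imsetP; exists X => //.
  by rewrite inE XT.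
have ZY : forall X : {set T}, Z \subset X -> Z \subset X :\ e.
  move=> X ZX; apply/subsetP => x xZ; rewrite !inE (subsetP ZX x xZ) andbT.
  by have := subsetP HZ x xZ; rewrite GN' !inE => /andP[].
have P1b : tangle_rank N (theta - 1) (inherited_tangle M N theta Tg) Z <= tangle_rank M theta Tg Z.
  rewrite {2}/tangle_rank; apply: bigmin_lb.
    exact: leq_trans (bigmin_d _ _ _) (leq_subr 1 theta).
  move=> X /andP[XT ZX].
  have XM := (T1 X XT).1.
  have /andP[c1 _] := CB X XM.
  case: (ltnP (conn N (X :\ e)) (theta - 1)) => hc.
  - apply: leq_trans c1; apply: bigmin_ub; by rewrite inT' // ZY.
  - exact: leq_trans (bigmin_d _ _ _) (leq_trans hc c1).
split.
  rewrite P1b andbT.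
  rewrite {2}/tangle_rank; apply: bigmin_lb.
    by rewrite leq_sub2r // bigmin_d.
  move=> Y /andP[YT' ZY'].
  case: (memT' Y YT') => X [XT EY _]; subst Y.
  have XM := (T1 X XT).1.
  have /andP[_ c2] := CB X XM.
  have : tangle_rank M theta Tg Z <= conn M X.
    apply: bigmin_ub; rewrite XT /=. exact: subset_trans ZY' (subsetDl _ _).
  move: c2; clear; lia.
move=> ncl rlt.
apply/eqP; rewrite eqn_leq P1b /=.
rewrite {2}/tangle_rank; apply: bigmin_lb.
  by move: rlt; clear; lia.
move=> Y /andP[YT' ZY'].
case: (memT' Y YT') => X [XT EY hk]; subst Y.
have XM := (T1 X XT).1.
have mono : tangle_rank M theta Tg Z <= tangle_rank M theta Tg (e |: Z).
  rewrite {2}/tangle_rank; apply: bigmin_lb; first exact: bigmin_d.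
  move=> Y /andP[YT eZY]; apply: bigmin_ub; rewrite YT /=.
  exact: subset_trans (subsetUr _ _) eZY.
have ne : tangle_rank M theta Tg (e |: Z) != tangle_rank M theta Tg Z.
  by move: ncl; rewrite /tangle_cl inE He.
have lt : tangle_rank M theta Tg Z < tangle_rank M theta Tg (e |: Z).
  by rewrite ltn_neqAle eq_sym ne mono.
suff : tangle_rank M theta Tg (e |: Z) <= (conn N (X :\ e)).+1.
  by move: lt; clear; lia.
have ZX : Z \subset X := subset_trans ZY' (subsetDl _ _).
case eX: (e \in X).
  have /andP[_ c2] := CB X XM.
  apply: leq_trans c2; apply: bigmin_ub; by rewrite XT /= subUset sub1set eX ZX.
have X2M : e |: X \subset ground M by rewrite subUset sub1set He XM.
have /andP[_ c2] := CB _ X2M.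
have EX2 : (e |: X) :\ e = X :\ e.
  apply/setP => x; rewrite !inE; case: (eqVneq x e) => [->|] //=; by rewrite eX.
rewrite EX2 in c2.
have c3 : conn M (e |: X) < theta by move: c2 hk; clear; lia.
case: (T2 _ X2M c3) => H2.
  apply: leq_trans c2; apply: bigmin_ub; by rewrite H2 /= setUS.
exfalso.
have se : [set e] \subset ground M by rewrite sub1set.
have ce : conn M [set e] < theta.
  have s1 : rk M [set e] <= 1 by rewrite -(cards1 e) rk_card.
  have s2 := rk_mono (subsetDl (ground M) [set e]) (subxx _).
  rewrite /conn; move: s1 s2 hk; clear; lia.
have eT : [set e] \in Tg.
  case: (T2 _ se ce) => // h; by move: (T4 e He); rewrite h.
apply: (T3 _ _ _ XT H2 eT).
apply/subsetP => x xG; rewrite !inE xG /=.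
by case: (x == e); case: (x \in X).
Qed.
End S.

Theorem lemma2p31 (T : finType) (M N : matroid T) (theta : nat)
    (Tg : {set {set T}}) (e : T) (Z : {set T}) :
  is_tangle M theta Tg ->
  is_minor N M ->
  ground M :\: ground N = [set e] ->
  Z \subset ground N ->
  (tangle_rank M theta Tg Z - 1
     <= tangle_rank N (theta - 1) (inherited_tangle M N theta Tg) Z
     <= tangle_rank M theta Tg Z)
  /\
  (e \notin tangle_cl M theta Tg Z -> tangle_rank M theta Tg Z < theta ->
     tangle_rank N (theta - 1) (inherited_tangle M N theta Tg) Z
       = tangle_rank M theta Tg Z).
Proof. exact: main_thm. Qed.
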